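(* Let $t\geq 3$, $E_t=\{1,\ldots,t\}$, and let $A$ be a nonempty subset of $E_t$, written as a disjoint union of intervals of integers $A=[i_1,j_1]\,\dot\cup\,[i_2,j_2]\,\dot\cup\cdots\dot\cup\,[i_\varrho,j_\varrho]$ with $i_k\le j_k$ and $j_k+2\le i_{k+1}$ for $1\le k\le\varrho-1$. Let $T:={}_{-A}\mathrm{T}^{(+)}\in\{1,-1\}^t$ be the vector with $T(e)=-1$ for $e\in A$ and $T(e)=1$ otherwise. Then: (i) If $\{1,t\}\cap A=\{1\}$ (so $i_1=1$), then $\mathfrak{q}(T)=2\varrho-1$, $\boldsymbol{x}(T)=\sum_{k=1}^{\varrho}\boldsymbol{\sigma}(j_k+1)-\sum_{\ell=2}^{\varrho}\boldsymbol{\sigma}(i_\ell)$; moreover $\mathfrak{q}(\mathrm{ro}(T))=2\varrho-1$, $\boldsymbol{x}(\mathrm{ro}(T))=\sum_{k=1}^{\varrho}\boldsymbol{\sigma}(t-j_k+1)-\sum_{\ell=2}^{\varrho}\boldsymbol{\sigma}(t-i_\ell+2)$, and $\boldsymbol{x}(\mathrm{ro}(T))=\boldsymbol{x}(T)\,\overline{\mathbf{U}}(t)\,\overline{\mathbf{T}}(t)$. (ii) If $\{1,t\}\cap A=\{1,t\}$ (so $i_1=1$, $j_\varrho=t$), then $\mathfrak{q}(T)=2\varrho-1$, $\boldsymbol{x}(T)=-\boldsymbol{\sigma}(1)+\sum_{k=1}^{\varrho-1}\boldsymbol{\sigma}(j_k+1)-\sum_{\ell=2}^{\varrho}\boldsymbol{\sigma}(i_\ell)$;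 moreover $\mathfrak{q}(\mathrm{ro}(T))=2\varrho-1$, $\boldsymbol{x}(\mathrm{ro}(T))=\boldsymbol{\sigma}(1)+\sum_{k=1}^{\varrho-1}\boldsymbol{\sigma}(t-j_k+1)-\sum_{\ell=2}^{\varrho}\boldsymbol{\sigma}(t-i_\ell+2)$, and $\boldsymbol{x}(\mathrm{ro}(T))=\boldsymbol{\sigma}(1)+\boldsymbol{x}(T)\,\overline{\mathbf{U}}(t)\,\overline{\mathbf{T}}(t)$. (iii) If $\{1,t\}\cap A=\emptyset$, then $\mathfrak{q}(T)=2\varrho+1$, $\boldsymbol{x}(T)=\boldsymbol{\sigma}(1)+\sum_{k=1}^{\varrho}\boldsymbol{\sigma}(j_k+1)-\sum_{\ell=1}^{\varrho}\boldsymbol{\sigma}(i_\ell)$; moreover $\mathfrak{q}(\mathrm{ro}(T))=2\varrho+1$, $\boldsymbol{x}(\mathrm{ro}(T))=-\boldsymbol{\sigma}(1)+\sum_{k=1}^{\varrho}\boldsymbol{\sigma}(t-j_k+1)-\sum_{\ell=1}^{\varrho}\boldsymbol{\sigma}(t-i_\ell+2)$, and $\boldsymbol{x}(\mathrm{ro}(T))=-\boldsymbol{\sigma}(1)+\boldsymbol{x}(T)\,\overline{\mathbf{U}}(t)\,\overline{\mathbf{T}}(t)$. (iv) If $\{1,t\}\cap A=\{t\}$ (so $j_\varrho=t$), then $\mathfrak{q}(T)=2\varrho-1$, $\boldsymbol{x}(T)=\sum_{k=1}^{\varrho-1}\boldsymbol{\sigma}(j_k+1)-\sum_{\ell=1}^{\varrho}\boldsymbol{\sigma}(i_\ell)$;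 moreover $\mathfrak{q}(\mathrm{ro}(T))=2\varrho-1$, $\boldsymbol{x}(\mathrm{ro}(T))=\sum_{k=1}^{\varrho-1}\boldsymbol{\sigma}(t-j_k+1)-\sum_{\ell=1}^{\varrho}\boldsymbol{\sigma}(t-i_\ell+2)$, and $\boldsymbol{x}(\mathrm{ro}(T))=\boldsymbol{x}(T)\,\overline{\mathbf{U}}(t)\,\overline{\mathbf{T}}(t)$.
   Context: Vectors are row vectors in $\mathbb{R}^t$; $\boldsymbol{\sigma}(e)$ is the $e$-th standard unit vector, $\mathrm{T}^{(+)}=(1,\ldots,1)$. For $S\subseteq E_t$, ${}_{-S}\mathrm{T}^{(+)}$ denotes the vector with entries $-1$ on $S$ and $1$ elsewhere. Define $R^0:=\mathrm{T}^{(+)}$ and $R^s:={}_{-[s]}\mathrm{T}^{(+)}$ for $1\le s\le t-1$, where $[s]=\{1,\ldots,s\}$ (these form the first half of a symmetric cycle $R^0,\ldots,R^{2t-1}$ in the hypercube graph on $\{1,-1\}^t$, with $R^{t+k}=-R^k$). The vectors $R^0,\ldots,R^{t-1}$ form a basis of $\mathbb{R}^t$; for $T\in\{1,-1\}^t$, $\boldsymbol{x}(T)=(x_1,\ldots,x_t)$ denotes the unique vector (it lies in $\{-1,0,1\}^t$) with $T=\sum_{i=1}^t x_iR^{i-1}$, and $\mathfrak{q}(T)$ denotes the number of nonzero entries of $\boldsymbol{x}(T)$ (equivalently the cardinality of the unique inclusion-minimal subset of $\{R^0,\ldots,R^{2t-1}\}$ summing to $T$). $\overline{\mathbf{U}}(t)$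 is the $t\times t$ backward identity matrix, with $(i,j)$ entry $\delta_{i+j,t+1}$; $\overline{\mathbf{T}}(t)$ is the $t\times t$ forward shift matrix, with $(i,j)$ entry $\delta_{j-i,1}$. The relabeled opposite of $T$ is $\mathrm{ro}(T):=-T\,\overline{\mathbf{U}}(t)$, i.e. $\mathrm{ro}(T)(e)=-T(t-e+1)$. *)

(* Defs.v *)
(* Vectors in R^t are row vectors 'rV[R]_t over an arbitrary
   real field R (covers the reals).  Coordinates e in E_t = {1..t} correspond
   to ordinals j : 'I_t with e = j.+1. *)
From HB Require Import structures.
From mathcomp Require Import all_boot all_order all_algebra.
Set Implicit Arguments. Unset Strict Implicit. Unset Printing Implicit Defensive.
Import Order.TTheory GRing.Theory Num.Theory.
Local Open Scope ring_scope.

Section Defs.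
Variable R : realFieldType.

Definition sigma (t e : nat) : 'rV[R]_t := \row_(j < t) (j.+1 == e)%:R.

Definition negT (t : nat) (S : pred nat) : 'rV[R]_t :=
  \row_(j < t) (if S j.+1 then -1 else 1).

Definition Rvec (t s : nat) : 'rV[R]_t := negT t (fun e => e <= s)%N.

Definition Rmat (t : nat) : 'M[R]_t := \matrix_(s < t) Rvec t s.

(* x(T): the unique coefficient vector with T = sum_i x_i R^{i-1},
   i.e. T = x *m Rmat t  (Rmat t is invertible) *)
Definition xvec (t : nat) (T : 'rV[R]_t) : 'rV[R]_t := T *m invmx (Rmat t).

Definition qnum (t : nat) (T : 'rV[R]_t) : nat :=
  #|[set j : 'I_t | xvec T 0 j != 0]|.

Definition Ubar (t : nat) : 'M[R]_t := \matrix_(i < t, j < t) ((i.+1 + j.+1 == t.+1)%N)%:R.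

Definition Tbar (t : nat) : 'M[R]_t := \matrix_(i < t, j < t) ((nat_of_ord j == i.+1)%N)%:R.

Definition ro (t : nat) (T : 'rV[R]_t) : 'rV[R]_t := - (T *m Ubar t).

End Defs.

(* membership in A = union of the intervals [i k, j k], k < rho (0-based k) *)
Definition inA (rho : nat) (i j : nat -> nat) (e : nat) : bool :=
  [exists k : 'I_rho, (i k <= e <= j k)%N].

(* Main.v *)
Require Import Defs.
From HB Require Import structures.
From mathcomp Require Import all_boot all_order all_algebra.
From mathcomp Require Import zify ring lra.
Import Order.TTheory GRing.Theory Num.Theory.
Local Open Scope ring_scope.

Ltac splitifs := repeat match goal with
 | |- context [if ?b then _ else _] => let H := fresh "Hif" in case: ifP => H
 end.
Ltac olia := repeat match goal with | s : ordinal ?m |- _ =>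
  lazymatch goal with | _ : is_true (nat_of_ord s < m)%N |- _ => fail | _ => let H := fresh "Hord" in have H := ltn_ord s end end; simpl in *; lia.

Section Gen.
Variable R : realFieldType.
Variable n : nat.
Local Notation t := n.+1.

Lemma RmatE (s c : 'I_t) : Rmat R t s c = if (c.+1 <= s)%N then -1 else 1.
Proof. by rewrite /Rmat /Rvec /negT !mxE. Qed.

Definition Dv (y : 'rV[R]_t) : 'rV[R]_t := \row_(c < t)
  (if (nat_of_ord c == 0)%N then (y 0 ord0 + y 0 ord_max) / 2
   else (y 0 c - y 0 (inord c.-1)) / 2).

Lemma Dv_Rmat x : Dv (x *m Rmat R t) = x.
Proof.
apply/rowP => c; rewrite !mxE.
case: ifP => [/eqP c0|cn0].
- have -> : c = ord0 by apply/val_inj.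
  rewrite -big_split (bigD1 ord0) //= big1 => [|s Hs].
  + rewrite !RmatE /=; lra.
  + have Hs' : (0 < s)%N.
      by rewrite lt0n; apply: contra Hs => /eqP H; apply/eqP/val_inj.
    rewrite !RmatE; splitifs; try olia; lra.
- rewrite -sumrB (bigD1 c) //= big1 => [|s Hs].
  + rewrite !RmatE inordK; last by have := ltn_ord c; lia.
    splitifs; try olia. lra.
  + rewrite !RmatE inordK; last by have := ltn_ord c; lia.
    have Hs' : (nat_of_ord s != nat_of_ord c) by [].
    splitifs; try olia; lra.
Qed.

Lemma Rmat_unit : Rmat R t \in unitmx.
Proof.
rewrite -row_free_unit; apply: inj_row_free => v Hv.
by rewrite -(Dv_Rmat v) Hv; apply/rowP => c; rewrite !mxE; case: ifP => _; rewrite ?mxE; lra.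
Qed.

Lemma xvecE T : xvec T = Dv T.
Proof. by rewrite -{2}(mulmxKV Rmat_unit T) Dv_Rmat. Qed.

Lemma roE (T : 'rV[R]_t) c : ro T 0 c = - T 0 (rev_ord c).
Proof.
rewrite /ro /Ubar !mxE (bigD1 (rev_ord c)) //= big1 => [|s Hs].
- rewrite !mxE /=.
  have E : ((t - c.+1).+1 + c.+1 == n.+2)%N by apply/eqP; have := ltn_ord c; lia.
  by rewrite E mulr1 addr0.
- rewrite !mxE.
  have -> : ((s.+1 + c.+1)%N == n.+2) = false.
    apply/negbTE/eqP => E; move/eqP: Hs; apply; apply/val_inj => /=; lia.
  by rewrite mulr0.
Qed.

Lemma UTE (X : 'rV[R]_t) (c : 'I_t) :
  (X *m Ubar R t *m Tbar R t) 0 c =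
  if (nat_of_ord c == 0)%N then 0 else X 0 (inord (t - c)).
Proof.
rewrite /Ubar /Tbar !mxE; case: ifP => [/eqP c0|cn0].
- rewrite big1 // => s _; rewrite !mxE c0 mulr0 //.
- rewrite (bigD1 (inord c.-1)) //= big1 => [|s Hs].
  + rewrite !mxE inordK; last by have := ltn_ord c; lia.
    have -> : (nat_of_ord c == c.-1.+1) by apply/eqP; lia.
    rewrite mulr1 addr0 (bigD1 (rev_ord (inord c.-1))) //= big1 => [|s Hs].
    * rewrite !mxE /= inordK; last by have := ltn_ord c; lia.
      have -> : ((t - c.-1.+1).+1 + c.-1.+1 == t.+1)%N by apply/eqP; have := ltn_ord c; lia.
      rewrite mulr1 addr0; congr (X 0 _); apply/val_inj => /=.
      rewrite !inordK; have := ltn_ord c; lia.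
    * rewrite !mxE inordK; last by have := ltn_ord c; lia.
      have -> : ((s.+1 + c.-1.+1)%N == t.+1) = false.
        apply/negbTE/eqP => E; move/eqP: Hs; apply; apply/val_inj => /=.
        rewrite inordK; have := ltn_ord c; lia.
      by rewrite mulr0.
  + rewrite !mxE.
    have -> : (nat_of_ord c == s.+1) = false.
      apply/negbTE/eqP => E; move/eqP: Hs; apply; apply/val_inj => /=.
      rewrite inordK; have := ltn_ord c; lia.
    by rewrite mulr0.
Qed.


Definition xg (a : nat -> bool) (c : nat) : R :=
  if (c == 0)%N then 1 - (a 1%N)%:R - (a t)%:R else (a c)%:R - (a c.+1)%:R.

Ltac boolcase a := repeat match goal with
 | |- context [a ?x] => let E := fresh "Ea" in case E : (a x); rewrite ?E
 end.

Lemma Xent (a : nat -> bool) (c : 'I_t) : xvec (negT R t a) 0 c = xg a c.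
Proof.
rewrite xvecE /xg /negT !mxE; case: ifP => c0.
- boolcase a; rewrite /=; lra.
- rewrite ?mxE inordK; last by have := ltn_ord c; lia.
  have -> : c.-1.+1 = c by lia.
  boolcase a; rewrite /=; lra.
Qed.

Lemma Xroent (a : nat -> bool) (c : 'I_t) : xvec (ro (negT R t a)) 0 c =
  if (nat_of_ord c == 0)%N then - xg a 0%N else xg a (t - c).
Proof.
rewrite xvecE /xg mxE !roE /negT ?mxE; case: ifP => c0.
- rewrite /= subnn.
  have -> : ((t - 1).+1 = t)%N by lia.
  boolcase a; rewrite /=; lra.
- have -> : ((t - c == 0) = false)%N by apply/negbTE; have := ltn_ord c; lia.
  have -> : ((rev_ord c).+1 = t - c)%N by rewrite /=; have := ltn_ord c; lia.
  have -> : ((rev_ord (inord c.-1 : 'I_t)).+1 = (t - c).+1)%N.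
    by rewrite /= inordK; have := ltn_ord c; lia.
  boolcase a; rewrite /=; lra.
Qed.

Lemma UTent (a : nat -> bool) (c : 'I_t) :
  (xvec (negT R t a) *m Ubar R t *m Tbar R t) 0 c =
  if (nat_of_ord c == 0)%N then 0 else xg a (t - c).
Proof.
rewrite UTE; case: ifP => // c0.
by rewrite Xent inordK //; have := ltn_ord c; lia.
Qed.

Lemma card_nz (Y : 'rV[R]_t) (g : nat -> R) :
  (forall c : 'I_t, Y 0 c = g c) ->
  #|[set c : 'I_t | Y 0 c != 0]| = (\sum_(0 <= c < t) (g c != 0%R))%N.
Proof.
move=> HY; rewrite -sum1_card big_mkcond /= big_mkord.
by apply: eq_bigr => c _; rewrite inE HY; case: (g c != 0%R).
Qed.

Lemma qnumE (a : nat -> bool) :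
  qnum (negT R t a) = ((xg a 0 != 0%R) + \sum_(1 <= c < t) (xg a c != 0%R))%N.
Proof.
rewrite /qnum (card_nz _ (xg a)); last by move=> c; rewrite Xent.
by rewrite big_ltn.
Qed.

Lemma qnum_ro (a : nat -> bool) : qnum (ro (negT R t a)) = qnum (negT R t a).
Proof.
rewrite qnumE /qnum (card_nz _ (fun c => if (c == 0)%N then - xg a 0%N else xg a (t - c))); last first.
  by move=> c; rewrite Xroent.
- rewrite big_ltn // eqxx oppr_eq0; congr (_ + _)%N.
  rewrite [RHS]big_nat_rev /=; apply: eq_big_nat => c Hc.
  have -> : ((c == 0) = false)%N by apply/negbTE; lia.
  by rewrite add1n subSS.
Qed.

End Gen.

Set Implicit Arguments. Unset Strict Implicit.

Lemma sum1_nat (r : nat) : (\sum_(k < r) 1)%N = r.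
Proof. by elim: r => [|r IH]; rewrite ?big_ord0 // big_ord_recr /= IH addn1. Qed.

Lemma cnt_eq (m p x : nat) : (\sum_(m <= c < p) (x == c))%N = (m <= x < p)%N.
Proof.
elim: p => [|p IH]; first by rewrite big_geq //; lia.
case: (leqP m p) => h.
- rewrite big_nat_recr //= IH; case: (x =P p) => E; lia.
- rewrite big_geq //; lia.
Qed.

Lemma cnt_eqS (m p x : nat) : (\sum_(m <= c < p) (x == c.+1))%N = (m < x <= p)%N.
Proof.
elim: p => [|p IH]; first by rewrite big_geq //; lia.
case: (leqP m p) => h.
- rewrite big_nat_recr //= IH; case: (x =P p.+1) => E; lia.
- rewrite big_geq //; lia.
Qed.

Lemma cnt_inj (rho e : nat) (f : nat -> nat) :
  (forall k k', (k < k')%N -> (k' < rho)%N -> (f k < f k')%N) ->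
  (\sum_(k < rho) (f k == e))%N = [exists k : 'I_rho, f k == e].
Proof.
move=> Hf; case: existsP => [[k0 /eqP H]|H].
- rewrite (bigD1 k0) //= big1 => [|k Hk]; first by rewrite H eqxx.
  case: (f k =P e) => // E; move/eqP: Hk; case; apply/val_inj.
  have := ltn_ord k; have := ltn_ord k0.
  case: (ltngtP k k0) => // h1 h2 h3.
  + have := Hf _ _ h1 h2; lia.
  + have := Hf _ _ h1 h3; lia.
- rewrite big1 // => k _; case: (f k =P e) => // E; case: H; by exists k; rewrite E.
Qed.

Lemma big_pred_ord (m : nat) (F : nat -> nat) : (0 < m)%N ->
  (\sum_(k < m) F k = \sum_(k < m.-1) F k + F m.-1)%N.
Proof. by case: m => // m _; rewrite big_ord_recr. Qed.

Lemma big_first (m : nat) (F : nat -> nat) : (0 < m)%N ->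
  (\sum_(k < m) F k = F 0 + \sum_(1 <= k < m) F k)%N.
Proof.
case: m => // m _; rewrite big_ord_recl big_add1 /= big_mkord.
by congr (_ + _)%N; apply: eq_bigr.
Qed.

Ltac beq := congr (nat_of_bool _); apply/idP/idP => /eqP ?; apply/eqP; lia.

Section Comb.
Variables (rho : nat) (i j : nat -> nat) (t : nat).
Hypotheses (Hrho : (1 <= rho)%N) (Hi0 : (1 <= i 0)%N) (Hjl : (j rho.-1 <= t)%N)
  (Hij : forall k, (k < rho)%N -> (i k <= j k)%N)
  (Hsep : forall k, (k.+1 < rho)%N -> (j k + 2 <= i k.+1)%N).
Local Notation a := (inA rho i j).

Lemma mono k k' : (k < k')%N -> (k' < rho)%N -> (j k + 2 <= i k')%N.
Proof.
elim: k' => [//|k' IH] lt lt'.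
case: (ltnP k k') => h.
- have := IH h (ltnW lt'); have := Hij (ltnW lt'); have := Hsep lt'; lia.
- have -> : k = k' by lia.
  exact: Hsep.
Qed.

Lemma cmp k k' : (k < rho)%N -> (k' < rho)%N ->
  [/\ (i k <= j k)%N, (i k' <= j k')%N &
  (k = k' \/ ((k < k')%N /\ (j k + 2 <= i k')%N) \/ ((k' < k)%N /\ (j k' + 2 <= i k)%N))].
Proof.
move=> h1 h2; split; try exact: Hij.
case: (ltngtP k k') => h; [right; left | right; right | left] => //.
- by split => //; apply: mono.
- by split => //; apply: mono.
Qed.

Lemma i_ge1 k : (k < rho)%N -> (1 <= i k)%N.
Proof. case: k => [//|k] h; have := mono (ltn0Sn k) h; lia. Qed.

Lemma j_le k : (k < rho)%N -> (j k <= t)%N.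
Proof.
move=> h; have hl : (rho.-1 < rho)%N by lia.
case: (ltngtP k rho.-1) => h'; try lia.
- have := mono h' hl; have := Hij hl; lia.
- by rewrite h'.
Qed.

Lemma LJ e : [exists k : 'I_rho, j k == e] = a e && ~~ a e.+1.
Proof.
apply/existsP/andP => [[k /eqP E]|[/existsP[k /andP[h1 h2]] hn]].
- split; first by apply/existsP; exists k; rewrite -E leqnn andbT Hij.
  apply/negP => /existsP [k' /andP[h1 h2]].
  have [? ? [E'|[[? ?]|[? ?]]]] := cmp (ltn_ord k) (ltn_ord k'); [rewrite E' in E; lia|lia|lia].
- exists k; apply/eqP; case: (j k =P e) => // ne; exfalso; move/existsP: hn; apply.
  exists k; apply/andP; lia.
Qed.

Lemma LI e : [exists k : 'I_rho, i k == e.+1] = ~~ a e && a e.+1.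
Proof.
apply/existsP/andP => [[k /eqP E]|[hn /existsP[k /andP[h1 h2]]]].
- split; last by apply/existsP; exists k; rewrite -E leqnn Hij.
  apply/negP => /existsP [k' /andP[h1 h2]].
  have [? ? [E'|[[? ?]|[? ?]]]] := cmp (ltn_ord k) (ltn_ord k'); [rewrite E' in E; lia|lia|lia].
- exists k; apply/eqP; case: (i k =P e.+1) => // ne; exfalso; move/existsP: hn; apply.
  exists k; apply/andP; lia.
Qed.

Lemma jinc k k' : (k < k')%N -> (k' < rho)%N -> (j k < j k')%N.
Proof. move=> h1 h2; have := mono h1 h2; have := Hij h2; lia. Qed.
Lemma iinc k k' : (k < k')%N -> (k' < rho)%N -> (i k < i k')%N.
Proof. move=> h1 h2; have := mono h1 h2; have := Hij (ltn_trans h1 h2); lia. Qed.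

Lemma SJ e : (\sum_(k < rho) (j k == e))%N = a e && ~~ a e.+1.
Proof. by rewrite cnt_inj ?LJ //; apply: jinc. Qed.
Lemma SI e : (\sum_(k < rho) (i k == e.+1))%N = ~~ a e && a e.+1.
Proof. by rewrite cnt_inj ?LI //; apply: iinc. Qed.

Lemma a0 : a 0 = false.
Proof. by apply/existsP => -[k /andP[h1 h2]]; have := i_ge1 (ltn_ord k); lia. Qed.
Lemma aT1 : a t.+1 = false.
Proof. by apply/existsP => -[k /andP[h1 h2]]; have := j_le (ltn_ord k); lia. Qed.
Lemma a1 : a 1 = (i 0 == 1)%N.
Proof.
have h0 : (0 < rho)%N by lia.
apply/existsP/eqP => [[k /andP[h1 h2]]|E].
- have [? ? [E'|[[? ?]|[? ?]]]] := cmp (ltn_ord k) h0; try lia.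
  by move: h1; rewrite E'; lia.
- by exists (Ordinal h0); rewrite /= E leqnn /=; have := Hij h0; lia.
Qed.
Lemma aT : a t = (j rho.-1 == t)%N.
Proof.
have h0 : (rho.-1 < rho)%N by lia.
apply/existsP/eqP => [[k /andP[h1 h2]]|E].
- have hk := ltn_ord k; have [? ? [E'|[[? ?]|[? ?]]]] := cmp (ltn_ord k) h0; try lia.
  by move: h2; rewrite E'; lia.
- by exists (@Ordinal rho rho.-1 h0); rewrite /= E leqnn andbT; have := Hij h0; lia.
Qed.

Lemma CNT : (\sum_(1 <= c < t) (a c != a c.+1))%N =
  ((rho.-1 + (j rho.-1 != t)) + ((i 0 != 1) + rho.-1))%N.
Proof.
transitivity (\sum_(1 <= c < t) (\sum_(k < rho) (j k == c) + \sum_(k < rho) (i k == c.+1)))%N.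
  by apply: eq_big_nat => c _; rewrite SJ SI; case: (a c); case: (a c.+1).
rewrite big_split /= exchange_big /= [X in (_ + X)%N]exchange_big /=.
under eq_bigr do rewrite cnt_eq.
under [X in (_ + X)%N]eq_bigr do rewrite cnt_eqS.
congr (_ + _)%N.
- rewrite (big_pred_ord (fun k => (1 <= j k < t)%N)) //; congr (_ + _)%N.
  + rewrite -[X in _ = X]sum1_nat; apply: eq_bigr => k _.
    have hk := ltn_ord k; have hl : (rho.-1 < rho)%N by lia.
    have hk' : (k < rho)%N by lia.
    have := jinc hk hl; have := i_ge1 hk'; have := Hij hk'; lia.
  + have hl : (rho.-1 < rho)%N by lia.
    have := i_ge1 hl; have := Hij hl; case: (j rho.-1 =P t) => /= h; lia.
- rewrite (big_first (fun k => (1 < i k <= t)%N)) //; congr (_ + _)%N.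
  + have := Hij Hrho; have := j_le Hrho; case: (i 0 =P 1) => /= h; lia.
  + rewrite -[X in _ = X]muln1 -[X in _ = (X * 1)%N]subn1 -sum_nat_const_nat.
    apply: eq_big_nat => k hk.
    have hk' : (k < rho)%N by lia.
    have := iinc (_ : (0 < k)%N) hk'; have := Hij hk'; have := j_le hk'; lia.
Qed.

Variable R : realFieldType.

Lemma sigmaE e (c : 'I_t) : sigma R t e 0 c = (c.+1 == e)%N%:R.
Proof. by rewrite /sigma mxE. Qed.

Lemma GS (f : nat -> nat) (c : 'I_t) :
  (\sum_(k < rho) sigma R t (f k)) 0 c = (\sum_(k < rho) (c.+1 == f k))%N%:R.
Proof. by rewrite summxE natr_sum; apply: eq_bigr => k _; rewrite sigmaE. Qed.

Lemma GS1 (f : nat -> nat) (c : 'I_t) :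
  (\sum_(1 <= k < rho) sigma R t (f k)) 0 c =
  (\sum_(k < rho) (c.+1 == f k))%N%:R - (c.+1 == f 0)%N%:R.
Proof.
rewrite (big_first (fun k => (c.+1 == f k) : nat)) // natrD addrC addKr.
by rewrite summxE natr_sum; apply: eq_big_nat => k _; rewrite sigmaE.
Qed.

Lemma GSm (f : nat -> nat) (c : 'I_t) :
  (\sum_(k < rho.-1) sigma R t (f k)) 0 c =
  (\sum_(k < rho) (c.+1 == f k))%N%:R - (c.+1 == f rho.-1)%N%:R.
Proof.
rewrite (big_pred_ord (fun k => (c.+1 == f k) : nat)) // natrD addrK.
by rewrite summxE natr_sum; apply: eq_bigr => k _; rewrite sigmaE.
Qed.

Lemma sJ (c : 'I_t) : (\sum_(k < rho) (c.+1 == j k + 1))%N = a c && ~~ a c.+1.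
Proof. by rewrite -SJ; apply: eq_bigr => k _; beq. Qed.
Lemma sI (c : 'I_t) : (\sum_(k < rho) (c.+1 == i k))%N = ~~ a c && a c.+1.
Proof. by rewrite -SI; apply: eq_bigr => k _; beq. Qed.
Lemma sJro (c : 'I_t) : (\sum_(k < rho) (c.+1 == t - j k + 1))%N =
  a (t - c) && ~~ a (t - c).+1.
Proof.
rewrite -SJ; apply: eq_bigr => k _.
have := j_le (ltn_ord k); have := ltn_ord c; move=> h1 h2; beq.
Qed.
Lemma sIro (c : 'I_t) : (\sum_(k < rho) (c.+1 == t - i k + 2))%N =
  ~~ a (t - c) && a (t - c).+1.
Proof.
rewrite -SI; apply: eq_bigr => k _.
have := j_le (ltn_ord k); have := Hij (ltn_ord k); have := ltn_ord c; move=> h1 h2 h3; beq.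
Qed.

End Comb.

Lemma X0nz (R : realFieldType) (b1 b2 : bool) :
  ((1 - b1%:R - b2%:R : R) != 0) = (b1 == b2).
Proof.
by case: b1; case: b2 => /=; case: eqP => h //=; exfalso; move: h; rewrite ?mulr1n ?mulr0n; lra.
Qed.

Ltac fin := rewrite /=; repeat match goal with
  | |- context [(?x == ?y :> nat)] =>
      first [ have -> : (x == y) = false by apply/negbTE/eqP; lia
            | have -> : (x == y) = true by apply/eqP; lia ]
  end;
  repeat match goal with
  | |- context [inA ?r ?ii ?jj ?x] => let E := fresh "E" in case E : (inA r ii jj x); rewrite ?E
  end; rewrite /=; lra.

Unset Implicit Arguments.

(* intervals are indexed k = 0..rho-1 (paper's k = 1..rho) *)
Theorem proposition2p2 (R : realFieldType) (t rho : nat) (i j : nat -> nat) :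
  (3 <= t)%N -> (1 <= rho)%N ->
  (1 <= i 0)%N -> (j rho.-1 <= t)%N ->
  (forall k, (k < rho)%N -> (i k <= j k)%N) ->
  (forall k, (k.+1 < rho)%N -> (j k + 2 <= i k.+1)%N) ->
  let T : 'rV[R]_t := negT R t (inA rho i j) in
  let X := xvec T in
  let Xro := xvec (ro T) in
  (* (i) *)
  (inA rho i j 1 && ~~ inA rho i j t ->
     [/\ qnum T = (2 * rho).-1,
         X = \sum_(k < rho) sigma R t (j k + 1) - \sum_(1 <= l < rho) sigma R t (i l),
         qnum (ro T) = (2 * rho).-1,
         Xro = \sum_(k < rho) sigma R t (t - j k + 1)
               - \sum_(1 <= l < rho) sigma R t (t - i l + 2)
       & Xro = X *m Ubar R t *m Tbar R t]) /\
  (* (ii) *)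
  (inA rho i j 1 && inA rho i j t ->
     [/\ qnum T = (2 * rho).-1,
         X = - sigma R t 1 + \sum_(k < rho.-1) sigma R t (j k + 1)
             - \sum_(1 <= l < rho) sigma R t (i l),
         qnum (ro T) = (2 * rho).-1,
         Xro = sigma R t 1 + \sum_(k < rho.-1) sigma R t (t - j k + 1)
               - \sum_(1 <= l < rho) sigma R t (t - i l + 2)
       & Xro = sigma R t 1 + X *m Ubar R t *m Tbar R t]) /\
  (* (iii) *)
  (~~ inA rho i j 1 && ~~ inA rho i j t ->
     [/\ qnum T = (2 * rho).+1,
         X = sigma R t 1 + \sum_(k < rho) sigma R t (j k + 1)
             - \sum_(l < rho) sigma R t (i l),
         qnum (ro T) = (2 * rho).+1,
         Xro = - sigma R t 1 + \sum_(k < rho) sigma R t (t - j k + 1)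
               - \sum_(l < rho) sigma R t (t - i l + 2)
       & Xro = - sigma R t 1 + X *m Ubar R t *m Tbar R t]) /\
  (* (iv) *)
  (~~ inA rho i j 1 && inA rho i j t ->
     [/\ qnum T = (2 * rho).-1,
         X = \sum_(k < rho.-1) sigma R t (j k + 1) - \sum_(l < rho) sigma R t (i l),
         qnum (ro T) = (2 * rho).-1,
         Xro = \sum_(k < rho.-1) sigma R t (t - j k + 1)
               - \sum_(l < rho) sigma R t (t - i l + 2)
       & Xro = X *m Ubar R t *m Tbar R t]).
Proof.
case: t => [//|n] Ht Hrho Hi0 Hjl Hij Hsep T X Xro.
have A0 := a0 Hrho Hi0 Hjl Hij Hsep.
have AT1 := aT1 Hrho Hi0 Hjl Hij Hsep.
have A1 := a1 Hrho Hi0 Hjl Hij Hsep.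
have AT := aT Hrho Hi0 Hjl Hij Hsep.
have CN := CNT Hrho Hi0 Hjl Hij Hsep.
have SJ' := sJ Hrho Hi0 Hjl Hij Hsep.
have SI' := sI Hrho Hi0 Hjl Hij Hsep.
have SJro' := sJro Hrho Hi0 Hjl Hij Hsep.
have SIro' := sIro Hrho Hi0 Hjl Hij Hsep.
have QT : qnum T = ((xg R n (inA rho i j) 0 != 0%R) +
   \sum_(1 <= c < n.+1) (inA rho i j c != inA rho i j c.+1))%N.
  rewrite /T qnumE; congr (_ + _)%N; apply: eq_big_nat => c /andP[h _].
  rewrite /xg; have -> : (c == 0)%N = false by lia.
  case: (inA rho i j c); case: (inA rho i j c.+1);
    rewrite /= ?subrr ?subr0 ?sub0r ?oppr_eq0 ?oner_eq0 ?eqxx //.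
have QX0 : (xg R n (inA rho i j) 0 != 0%R) = (inA rho i j 1 == inA rho i j n.+1).
  by rewrite /xg /= X0nz.
have QR : qnum (ro T) = qnum T by rewrite /T qnum_ro.
split; [|split; [|split]] => /andP[h1 ht].
-
  have i01 : i 0 = 1%N by apply/eqP; rewrite -A1.
  have jlt : (j rho.-1 == n.+1) = false by rewrite -AT; apply/negbTE.
  have QQ : qnum T = (2 * rho).-1.
    by rewrite QT CN QX0 h1 (negbTE ht) i01 jlt /=; lia.
  split.
  + exact: QQ.
  + apply/rowP => c; rewrite /X /T Xent !mxE (GS _ _ (fun k => j k + 1)%N) (GS1 Hrho _ (fun k => i k)) SJ' SI' ?sigmaE.
    rewrite /xg; case: c => [[|c] hc] /=.
    * rewrite A0 A1 i01 (negbTE ht) /=; fin.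
    * fin.
  + by rewrite QR.
  + apply/rowP => c; rewrite /Xro /T Xroent !mxE (GS _ _ (fun k => n.+1 - j k + 1)%N) (GS1 Hrho _ (fun k => n.+1 - i k + 2)%N) SJro' SIro' ?sigmaE.
    rewrite /xg; case: c => [[|c] hc] /=.
    * rewrite subn0 A1 i01 AT1 (negbTE ht) /=; fin.
    * fin.
  + apply/rowP => c; rewrite /Xro /X /T Xroent UTent.
    rewrite /xg; case: c => [[|c] hc] /=.
    * rewrite A1 i01 (negbTE ht) /=; fin.
    * fin.
-
  have i01 : i 0 = 1%N by apply/eqP; rewrite -A1.
  have jeq : j rho.-1 = n.+1 by apply/eqP; rewrite -AT.
  have QQ : qnum T = (2 * rho).-1.
    by rewrite QT CN QX0 h1 ht i01 jeq eqxx /=; lia.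
  split.
  + exact: QQ.
  + apply/rowP => c; rewrite /X /T Xent !mxE (GSm Hrho _ (fun k => j k + 1)%N) (GS1 Hrho _ (fun k => i k)) SJ' SI' ?sigmaE.
    rewrite /xg; case: c => [[|c] hc] /=.
    * rewrite A0 h1 ht /=; fin.
    * fin.
  + by rewrite QR.
  + apply/rowP => c; rewrite /Xro /T Xroent !mxE (GSm Hrho _ (fun k => n.+1 - j k + 1)%N) (GS1 Hrho _ (fun k => n.+1 - i k + 2)%N) SJro' SIro' ?sigmaE.
    rewrite /xg; case: c => [[|c] hc] /=.
    * rewrite subn0 h1 ht AT1 /=; fin.
    * fin.
  + apply/rowP => c; rewrite /Xro /X /T Xroent mxE UTent ?sigmaE.
    rewrite /xg; case: c => [[|c] hc] /=.
    * rewrite h1 ht /=; fin.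
    * fin.
-
  have i0ne : i 0 <> 1%N by move=> E; move: h1; rewrite A1 E.
  have jne : j rho.-1 <> n.+1 by move=> E; move: ht; rewrite AT E eqxx.
  have QQ : qnum T = (2 * rho).+1.
    rewrite QT CN QX0 (negbTE h1) (negbTE ht) /=.
    case: (i 0 =P 1%N) => // _; case: (j rho.-1 =P n.+1) => // _ /=; lia.
  split.
  + exact: QQ.
  + apply/rowP => c; rewrite /X /T Xent !mxE (GS _ _ (fun k => j k + 1)%N) (GS _ _ (fun k => i k)) SJ' SI' ?sigmaE.
    rewrite /xg; case: c => [[|c] hc] /=.
    * rewrite A0 (negbTE h1) (negbTE ht) /=; fin.
    * fin.
  + by rewrite QR.
  + apply/rowP => c; rewrite /Xro /T Xroent !mxE (GS _ _ (fun k => n.+1 - j k + 1)%N) (GS _ _ (fun k => n.+1 - i k + 2)%N) SJro' SIro' ?sigmaE.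
    rewrite /xg; case: c => [[|c] hc] /=.
    * rewrite subn0 (negbTE h1) (negbTE ht) AT1 /=; fin.
    * fin.
  + apply/rowP => c; rewrite /Xro /X /T Xroent mxE UTent ?mxE ?sigmaE.
    rewrite /xg; case: c => [[|c] hc] /=.
    * rewrite (negbTE h1) (negbTE ht) /=; fin.
    * fin.
-
  have i0ne : i 0 <> 1%N by move=> E; move: h1; rewrite A1 E.
  have jeq : j rho.-1 = n.+1 by apply/eqP; rewrite -AT.
  have QQ : qnum T = (2 * rho).-1.
    rewrite QT CN QX0 (negbTE h1) ht jeq eqxx /=.
    case: (i 0 =P 1%N) => // _ /=; lia.
  split.
  + exact: QQ.
  + apply/rowP => c; rewrite /X /T Xent !mxE (GSm Hrho _ (fun k => j k + 1)%N) (GS _ _ (fun k => i k)) SJ' SI' ?sigmaE.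
    rewrite /xg; case: c => [[|c] hc] /=.
    * rewrite A0 (negbTE h1) ht /=; fin.
    * fin.
  + by rewrite QR.
  + apply/rowP => c; rewrite /Xro /T Xroent !mxE (GSm Hrho _ (fun k => n.+1 - j k + 1)%N) (GS _ _ (fun k => n.+1 - i k + 2)%N) SJro' SIro' ?sigmaE.
    rewrite /xg; case: c => [[|c] hc] /=.
    * rewrite subn0 (negbTE h1) ht AT1 /=; fin.
    * fin.
  + apply/rowP => c; rewrite /Xro /X /T Xroent UTent.
    rewrite /xg; case: c => [[|c] hc] /=.
    * rewrite (negbTE h1) ht /=; fin.
    * fin.
Qed.
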